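(* Let $a=\sum_{t=0}^7a_te_t\in C\ell_{1,2}$ be nonzero with $P(a)=0$, let $K=a_0^2+a_2^2+a_4^2+a_6^2$ and $x=\frac{a'}{4K}$. Then $axa=a$, $xax=x$, $(ax)'=ax$ and $(xa)'=xa$.
   Context: $C\ell_{1,2}$ is the real Clifford algebra generated by $i_1,i_2,i_3$ with $i_1^2=1$, $i_2^2=i_3^2=-1$ and $i_ti_m=-i_mi_t$ for $t\neq m$, with real basis $e_0=1$, $e_1=i_1$, $e_2=i_2$, $e_3=i_1i_2$, $e_4=i_3$, $e_5=i_1i_3$, $e_6=i_2i_3$, $e_7=i_1i_2i_3$. For $a=\sum a_te_t$: the prime is $a'=a_0+a_1e_1-a_2e_2+a_3e_3-a_4e_4+a_5e_5-a_6e_6-a_7e_7$; $N(a)=a_0^2-a_1^2+a_2^2-a_3^2+a_4^2-a_5^2+a_6^2-a_7^2$, $T(a)=a_0a_7+a_2a_5-a_1a_6-a_3a_4$, $P(a)=N(a)^2+4T(a)^2$. *)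

(* Defs.v *)
From HB Require Import structures.
From mathcomp Require Import all_boot all_order all_algebra.
Set Implicit Arguments. Unset Strict Implicit. Unset Printing Implicit Defensive.
Import Order.TTheory GRing.Theory Num.Theory.
Local Open Scope ring_scope.

(* The basis index
   t in {0..7}, written in binary b2 b1 b0, is the blade i_1^{b0} i_2^{b1} i_3^{b2}:
   e0=1, e1=i1, e2=i2, e3=i1i2, e4=i3, e5=i1i3, e6=i2i3, e7=i1i2i3. *)
Definition cl12 (R : Type) := {ffun 'I_8 -> R}.

(* bit j (0-based) of t : generator i_{j+1} occurs in blade t *)
Definition bitn (t j : nat) : bool := odd (t %/ 2 ^ j).

(* number of transpositions needed to reorder e_s * e_u into canonical order:
   pairs (generator p in s, generator q in u) with p > q *)
Definition nswaps (s u : nat) : nat :=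
  \sum_(p < 3) \sum_(q < 3) [&& bitn s p, bitn u q & (q < p)%N].

(* common generators with negative square: i2^2 = i3^2 = -1 (i1^2 = 1) *)
Definition nnegsq (s u : nat) : nat :=
  \sum_(p < 3) [&& bitn s p, bitn u p & (0 < p)%N].

(* e_s * e_u = blade_sign s u * e_(s xor u) *)
Definition blade_sign (R : pzRingType) (s u : nat) : R :=
  (-1) ^+ (nswaps s u + nnegsq s u).

Definition clmul (R : pzRingType) (a b : cl12 R) : cl12 R :=
  [ffun k : 'I_8 => \sum_(s < 8) \sum_(u < 8)
      (if Nat.lxor s u == k :> nat then blade_sign R s u * a s * b u else 0)].

Definition clscale (R : pzRingType) (c : R) (a : cl12 R) : cl12 R :=
  [ffun k => c * a k].

Definition co (R : Type) (a : cl12 R) (t : nat) : R := a (inord t).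

Definition clprime (R : pzRingType) (a : cl12 R) : cl12 R :=
  [ffun k : 'I_8 => (if (k : nat) \in [:: 2; 4; 6; 7]%N then - a k else a k)].

Definition clN (R : pzRingType) (a : cl12 R) : R :=
  co a 0 ^+ 2 - co a 1 ^+ 2 + co a 2 ^+ 2 - co a 3 ^+ 2
  + co a 4 ^+ 2 - co a 5 ^+ 2 + co a 6 ^+ 2 - co a 7 ^+ 2.

Definition clT (R : pzRingType) (a : cl12 R) : R :=
  co a 0 * co a 7 + co a 2 * co a 5 - co a 1 * co a 6 - co a 3 * co a 4.

Definition clP (R : pzRingType) (a : cl12 R) : R :=
  clN a ^+ 2 + 4 * clT a ^+ 2.

(* Main.v *)
Require Import Defs.
From HB Require Import structures.
From mathcomp Require Import all_boot all_order all_algebra.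
From mathcomp Require Import ring lra.
Import Order.TTheory GRing.Theory Num.Theory.
Local Open Scope ring_scope.

Arguments co : simpl never.
Arguments blade_sign : simpl never.

Definition nsw (s u : nat) : nat :=
  ([&& bitn s 1, bitn u 0 & true] + [&& bitn s 2, bitn u 0 & true] + [&& bitn s 2, bitn u 1 & true]
   + [&& bitn s 1, bitn u 1 & true] + [&& bitn s 2, bitn u 2 & true])%N.

Lemma bsE (R : pzRingType) s u : blade_sign R s u = if odd (nsw s u) then -1 else 1.
Proof.
rewrite /blade_sign -signr_odd /nswaps /nnegsq !big_ord_recr !big_ord0 /= /nsw.
by case: (bitn s 0); case: (bitn s 1); case: (bitn s 2); case: (bitn u 0); case: (bitn u 1); case: (bitn u 2).
Qed.

Section S.
Variable R : comNzRingType.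
Implicit Types a b : cl12 R.

Lemma sum8 (F : nat -> R) : \sum_(s < 8) F s = F 0%N + F 1%N + F 2%N + F 3%N + F 4%N + F 5%N + F 6%N + F 7%N.
Proof. by rewrite -(big_mkord xpredT F) /index_iota /= !big_cons big_nil addr0 !addrA. Qed.

Definition cterm a b (n s u : nat) : R :=
  if Nat.lxor s u == n then blade_sign R s u * co a s * co b u else 0.

Lemma sum88 (G : nat -> nat -> R) : \sum_(s < 8) \sum_(u < 8) G s u =
  \sum_(s < 8) (G s 0%N + G s 1%N + G s 2%N + G s 3%N + G s 4%N + G s 5%N + G s 6%N + G s 7%N).
Proof. by apply: eq_bigr => s _; rewrite (sum8 (G s)). Qed.

Lemma clmulE a b (n : nat) : (n < 8)%N -> co (clmul a b) n =
  \sum_(s < 8) \sum_(u < 8) cterm a b n s u.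
Proof.
move=> hn; rewrite /co ffunE inordK //; apply: eq_bigr => s _; apply: eq_bigr => u _.
by rewrite /cterm /co !inord_val.
Qed.

Lemma cm0 a b : co (clmul a b) 0 = (co a 0 * co b 0) + (co a 1 * co b 1) + (- co a 2 * co b 2) + (co a 3 * co b 3) + (- co a 4 * co b 4) + (co a 5 * co b 5) + (- co a 6 * co b 6) + (- co a 7 * co b 7).
Proof.
rewrite clmulE // sum88 (sum8 (fun s => cterm a b 0 s 0 + cterm a b 0 s 1 + cterm a b 0 s 2 + cterm a b 0 s 3 + cterm a b 0 s 4 + cterm a b 0 s 5 + cterm a b 0 s 6 + cterm a b 0 s 7)) /cterm /= !bsE /=.
ring.
Qed.

Lemma cm1 a b : co (clmul a b) 1 = (co a 0 * co b 1) + (co a 1 * co b 0) + (co a 2 * co b 3) + (- co a 3 * co b 2) + (co a 4 * co b 5) + (- co a 5 * co b 4) + (- co a 6 * co b 7) + (- co a 7 * co b 6).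
Proof.
rewrite clmulE // sum88 (sum8 (fun s => cterm a b 1 s 0 + cterm a b 1 s 1 + cterm a b 1 s 2 + cterm a b 1 s 3 + cterm a b 1 s 4 + cterm a b 1 s 5 + cterm a b 1 s 6 + cterm a b 1 s 7)) /cterm /= !bsE /=.
ring.
Qed.

Lemma cm2 a b : co (clmul a b) 2 = (co a 0 * co b 2) + (co a 1 * co b 3) + (co a 2 * co b 0) + (- co a 3 * co b 1) + (co a 4 * co b 6) + (- co a 5 * co b 7) + (- co a 6 * co b 4) + (- co a 7 * co b 5).
Proof.
rewrite clmulE // sum88 (sum8 (fun s => cterm a b 2 s 0 + cterm a b 2 s 1 + cterm a b 2 s 2 + cterm a b 2 s 3 + cterm a b 2 s 4 + cterm a b 2 s 5 + cterm a b 2 s 6 + cterm a b 2 s 7)) /cterm /= !bsE /=.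
ring.
Qed.

Lemma cm3 a b : co (clmul a b) 3 = (co a 0 * co b 3) + (co a 1 * co b 2) + (- co a 2 * co b 1) + (co a 3 * co b 0) + (- co a 4 * co b 7) + (co a 5 * co b 6) + (- co a 6 * co b 5) + (- co a 7 * co b 4).
Proof.
rewrite clmulE // sum88 (sum8 (fun s => cterm a b 3 s 0 + cterm a b 3 s 1 + cterm a b 3 s 2 + cterm a b 3 s 3 + cterm a b 3 s 4 + cterm a b 3 s 5 + cterm a b 3 s 6 + cterm a b 3 s 7)) /cterm /= !bsE /=.
ring.
Qed.

Lemma cm4 a b : co (clmul a b) 4 = (co a 0 * co b 4) + (co a 1 * co b 5) + (- co a 2 * co b 6) + (co a 3 * co b 7) + (co a 4 * co b 0) + (- co a 5 * co b 1) + (co a 6 * co b 2) + (co a 7 * co b 3).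
Proof.
rewrite clmulE // sum88 (sum8 (fun s => cterm a b 4 s 0 + cterm a b 4 s 1 + cterm a b 4 s 2 + cterm a b 4 s 3 + cterm a b 4 s 4 + cterm a b 4 s 5 + cterm a b 4 s 6 + cterm a b 4 s 7)) /cterm /= !bsE /=.
ring.
Qed.

Lemma cm5 a b : co (clmul a b) 5 = (co a 0 * co b 5) + (co a 1 * co b 4) + (co a 2 * co b 7) + (- co a 3 * co b 6) + (- co a 4 * co b 1) + (co a 5 * co b 0) + (co a 6 * co b 3) + (co a 7 * co b 2).
Proof.
rewrite clmulE // sum88 (sum8 (fun s => cterm a b 5 s 0 + cterm a b 5 s 1 + cterm a b 5 s 2 + cterm a b 5 s 3 + cterm a b 5 s 4 + cterm a b 5 s 5 + cterm a b 5 s 6 + cterm a b 5 s 7)) /cterm /= !bsE /=.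
ring.
Qed.

Lemma cm6 a b : co (clmul a b) 6 = (co a 0 * co b 6) + (co a 1 * co b 7) + (co a 2 * co b 4) + (- co a 3 * co b 5) + (- co a 4 * co b 2) + (co a 5 * co b 3) + (co a 6 * co b 0) + (co a 7 * co b 1).
Proof.
rewrite clmulE // sum88 (sum8 (fun s => cterm a b 6 s 0 + cterm a b 6 s 1 + cterm a b 6 s 2 + cterm a b 6 s 3 + cterm a b 6 s 4 + cterm a b 6 s 5 + cterm a b 6 s 6 + cterm a b 6 s 7)) /cterm /= !bsE /=.
ring.
Qed.

Lemma cm7 a b : co (clmul a b) 7 = (co a 0 * co b 7) + (co a 1 * co b 6) + (- co a 2 * co b 5) + (co a 3 * co b 4) + (co a 4 * co b 3) + (- co a 5 * co b 2) + (co a 6 * co b 1) + (co a 7 * co b 0).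
Proof.
rewrite clmulE // sum88 (sum8 (fun s => cterm a b 7 s 0 + cterm a b 7 s 1 + cterm a b 7 s 2 + cterm a b 7 s 3 + cterm a b 7 s 4 + cterm a b 7 s 5 + cterm a b 7 s 6 + cterm a b 7 s 7)) /cterm /= !bsE /=.
ring.
Qed.

Lemma cp0 a : co (clprime a) 0 = co a 0.
Proof. by rewrite /co ffunE inordK. Qed.

Lemma cp1 a : co (clprime a) 1 = co a 1.
Proof. by rewrite /co ffunE inordK. Qed.

Lemma cp2 a : co (clprime a) 2 = - co a 2.
Proof. by rewrite /co ffunE inordK. Qed.

Lemma cp3 a : co (clprime a) 3 = co a 3.
Proof. by rewrite /co ffunE inordK. Qed.

Lemma cp4 a : co (clprime a) 4 = - co a 4.
Proof. by rewrite /co ffunE inordK. Qed.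

Lemma cp5 a : co (clprime a) 5 = co a 5.
Proof. by rewrite /co ffunE inordK. Qed.

Lemma cp6 a : co (clprime a) 6 = - co a 6.
Proof. by rewrite /co ffunE inordK. Qed.

Lemma cp7 a : co (clprime a) 7 = - co a 7.
Proof. by rewrite /co ffunE inordK. Qed.

Lemma cs a (c : R) n : co (clscale c a) n = c * co a n.
Proof. by rewrite /co ffunE. Qed.

Lemma eq_cl8 a b : co a 0 = co b 0 -> co a 1 = co b 1 -> co a 2 = co b 2 -> co a 3 = co b 3 ->
  co a 4 = co b 4 -> co a 5 = co b 5 -> co a 6 = co b 6 -> co a 7 = co b 7 -> a = b.
Proof.
move=> h0 h1 h2 h3 h4 h5 h6 h7; apply/ffunP => k.
have: co a k = co b k by case: k => [[|[|[|[|[|[|[|[|//]]]]]]]]] ?.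
by rewrite /co inord_val.
Qed.

Lemma by_ideal (L Rr N T E p q c : R) : L - Rr = N * p + T * q + c * (E - 1) ->
  N = 0 -> T = 0 -> E = 1 -> L = Rr.
Proof. by move=> h hN hT hE; apply/eqP; rewrite -subr_eq0 h hN hT hE subrr mulr0 !mul0r !addr0. Qed.
End S.


Theorem lemma3p4 (R : realFieldType) (a : cl12 R) :
  a != 0 -> clP a = 0 ->
  let K := co a 0 ^+ 2 + co a 2 ^+ 2 + co a 4 ^+ 2 + co a 6 ^+ 2 in
  let x := clscale (4 * K)^-1 (clprime a) in
  [/\ clmul (clmul a x) a = a,
      clmul (clmul x a) x = x,
      clprime (clmul a x) = clmul a x
    & clprime (clmul x a) = clmul x a].
Proof.
move=> hA hP K x.
have hN : clN a = 0.
  have h1 := sqr_ge0 (clN a); have h2 := sqr_ge0 (clT a).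
  move: hP; rewrite /clP => hP.
  by apply/eqP; rewrite -sqrf_eq0; apply/eqP; lra.
have hT : clT a = 0.
  have h1 := sqr_ge0 (clN a); have h2 := sqr_ge0 (clT a).
  move: hP; rewrite /clP => hP.
  by apply/eqP; rewrite -sqrf_eq0; apply/eqP; lra.
have hK : K != 0.
  apply/negP => /eqP hK0; move/negP: hA; apply; apply/eqP.
  move: hN hK0; rewrite /clN /K => hN hK0.
  have g0 := sqr_ge0 (co a 0); have g1 := sqr_ge0 (co a 1); have g2 := sqr_ge0 (co a 2);
  have g3 := sqr_ge0 (co a 3); have g4 := sqr_ge0 (co a 4); have g5 := sqr_ge0 (co a 5);
  have g6 := sqr_ge0 (co a 6); have g7 := sqr_ge0 (co a 7).
  by apply: eq_cl8; rewrite /co ffunE; apply/eqP; rewrite -sqrf_eq0; apply/eqP; rewrite -/(co a _); lra.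
have h4K : 4 * K != 0 by rewrite mulf_neq0 // pnatr_eq0.
have hy : (4 * K)^-1 * (4 * K) = 1 by rewrite mulVf.
rewrite /x; move: hy; rewrite /K; set y := (4 * _)^-1 => hy.
split.
- apply: eq_cl8; rewrite ?(cm0, cm1, cm2, cm3, cm4, cm5, cm6, cm7) !cs ?(cp0, cp1, cp2, cp3, cp4, cp5, cp6, cp7).
  + apply: (@by_ideal _ _ _ (co a 0 ^+ 2 - co a 1 ^+ 2 + co a 2 ^+ 2 - co a 3 ^+ 2 + co a 4 ^+ 2 - co a 5 ^+ 2 + co a 6 ^+ 2 - co a 7 ^+ 2) (co a 0 * co a 7 + co a 2 * co a 5 - co a 1 * co a 6 - co a 3 * co a 4) (y * (4 * (co a 0 ^+ 2 + co a 2 ^+ 2 + co a 4 ^+ 2 + co a 6 ^+ 2))) (y * ((-3) * co a 0)) (y * ((-2) * co a 7)) (co a 0)); [by ring | exact: hN | exact: hT | exact: hy].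
  + apply: (@by_ideal _ _ _ (co a 0 ^+ 2 - co a 1 ^+ 2 + co a 2 ^+ 2 - co a 3 ^+ 2 + co a 4 ^+ 2 - co a 5 ^+ 2 + co a 6 ^+ 2 - co a 7 ^+ 2) (co a 0 * co a 7 + co a 2 * co a 5 - co a 1 * co a 6 - co a 3 * co a 4) (y * (4 * (co a 0 ^+ 2 + co a 2 ^+ 2 + co a 4 ^+ 2 + co a 6 ^+ 2))) (y * ((-1) * co a 1)) (y * ((2) * co a 6)) (co a 1)); [by ring | exact: hN | exact: hT | exact: hy].
  + apply: (@by_ideal _ _ _ (co a 0 ^+ 2 - co a 1 ^+ 2 + co a 2 ^+ 2 - co a 3 ^+ 2 + co a 4 ^+ 2 - co a 5 ^+ 2 + co a 6 ^+ 2 - co a 7 ^+ 2) (co a 0 * co a 7 + co a 2 * co a 5 - co a 1 * co a 6 - co a 3 * co a 4) (y * (4 * (co a 0 ^+ 2 + co a 2 ^+ 2 + co a 4 ^+ 2 + co a 6 ^+ 2))) (y * ((-3) * co a 2)) (y * ((-2) * co a 5)) (co a 2)); [by ring | exact: hN | exact: hT | exact: hy].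
  + apply: (@by_ideal _ _ _ (co a 0 ^+ 2 - co a 1 ^+ 2 + co a 2 ^+ 2 - co a 3 ^+ 2 + co a 4 ^+ 2 - co a 5 ^+ 2 + co a 6 ^+ 2 - co a 7 ^+ 2) (co a 0 * co a 7 + co a 2 * co a 5 - co a 1 * co a 6 - co a 3 * co a 4) (y * (4 * (co a 0 ^+ 2 + co a 2 ^+ 2 + co a 4 ^+ 2 + co a 6 ^+ 2))) (y * ((-1) * co a 3)) (y * ((2) * co a 4)) (co a 3)); [by ring | exact: hN | exact: hT | exact: hy].
  + apply: (@by_ideal _ _ _ (co a 0 ^+ 2 - co a 1 ^+ 2 + co a 2 ^+ 2 - co a 3 ^+ 2 + co a 4 ^+ 2 - co a 5 ^+ 2 + co a 6 ^+ 2 - co a 7 ^+ 2) (co a 0 * co a 7 + co a 2 * co a 5 - co a 1 * co a 6 - co a 3 * co a 4) (y * (4 * (co a 0 ^+ 2 + co a 2 ^+ 2 + co a 4 ^+ 2 + co a 6 ^+ 2))) (y * ((-3) * co a 4)) (y * ((2) * co a 3)) (co a 4)); [by ring | exact: hN | exact: hT | exact: hy].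
  + apply: (@by_ideal _ _ _ (co a 0 ^+ 2 - co a 1 ^+ 2 + co a 2 ^+ 2 - co a 3 ^+ 2 + co a 4 ^+ 2 - co a 5 ^+ 2 + co a 6 ^+ 2 - co a 7 ^+ 2) (co a 0 * co a 7 + co a 2 * co a 5 - co a 1 * co a 6 - co a 3 * co a 4) (y * (4 * (co a 0 ^+ 2 + co a 2 ^+ 2 + co a 4 ^+ 2 + co a 6 ^+ 2))) (y * ((-1) * co a 5)) (y * ((-2) * co a 2)) (co a 5)); [by ring | exact: hN | exact: hT | exact: hy].
  + apply: (@by_ideal _ _ _ (co a 0 ^+ 2 - co a 1 ^+ 2 + co a 2 ^+ 2 - co a 3 ^+ 2 + co a 4 ^+ 2 - co a 5 ^+ 2 + co a 6 ^+ 2 - co a 7 ^+ 2) (co a 0 * co a 7 + co a 2 * co a 5 - co a 1 * co a 6 - co a 3 * co a 4) (y * (4 * (co a 0 ^+ 2 + co a 2 ^+ 2 + co a 4 ^+ 2 + co a 6 ^+ 2))) (y * ((-3) * co a 6)) (y * ((2) * co a 1)) (co a 6)); [by ring | exact: hN | exact: hT | exact: hy].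
  + apply: (@by_ideal _ _ _ (co a 0 ^+ 2 - co a 1 ^+ 2 + co a 2 ^+ 2 - co a 3 ^+ 2 + co a 4 ^+ 2 - co a 5 ^+ 2 + co a 6 ^+ 2 - co a 7 ^+ 2) (co a 0 * co a 7 + co a 2 * co a 5 - co a 1 * co a 6 - co a 3 * co a 4) (y * (4 * (co a 0 ^+ 2 + co a 2 ^+ 2 + co a 4 ^+ 2 + co a 6 ^+ 2))) (y * ((-1) * co a 7)) (y * ((-2) * co a 0)) (co a 7)); [by ring | exact: hN | exact: hT | exact: hy].
- apply: eq_cl8; rewrite ?(cm0, cm1, cm2, cm3, cm4, cm5, cm6, cm7) !cs ?(cp0, cp1, cp2, cp3, cp4, cp5, cp6, cp7).
  + apply: (@by_ideal _ _ _ (co a 0 ^+ 2 - co a 1 ^+ 2 + co a 2 ^+ 2 - co a 3 ^+ 2 + co a 4 ^+ 2 - co a 5 ^+ 2 + co a 6 ^+ 2 - co a 7 ^+ 2) (co a 0 * co a 7 + co a 2 * co a 5 - co a 1 * co a 6 - co a 3 * co a 4) (y * (4 * (co a 0 ^+ 2 + co a 2 ^+ 2 + co a 4 ^+ 2 + co a 6 ^+ 2))) (y^+2 * ((-3) * co a 0)) (y^+2 * ((-2) * co a 7)) (y * ( co a 0))); [by ring | exact: hN | exact: hT | exact: hy].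
  + apply: (@by_ideal _ _ _ (co a 0 ^+ 2 - co a 1 ^+ 2 + co a 2 ^+ 2 - co a 3 ^+ 2 + co a 4 ^+ 2 - co a 5 ^+ 2 + co a 6 ^+ 2 - co a 7 ^+ 2) (co a 0 * co a 7 + co a 2 * co a 5 - co a 1 * co a 6 - co a 3 * co a 4) (y * (4 * (co a 0 ^+ 2 + co a 2 ^+ 2 + co a 4 ^+ 2 + co a 6 ^+ 2))) (y^+2 * ((-1) * co a 1)) (y^+2 * ((2) * co a 6)) (y * ( co a 1))); [by ring | exact: hN | exact: hT | exact: hy].
  + apply: (@by_ideal _ _ _ (co a 0 ^+ 2 - co a 1 ^+ 2 + co a 2 ^+ 2 - co a 3 ^+ 2 + co a 4 ^+ 2 - co a 5 ^+ 2 + co a 6 ^+ 2 - co a 7 ^+ 2) (co a 0 * co a 7 + co a 2 * co a 5 - co a 1 * co a 6 - co a 3 * co a 4) (y * (4 * (co a 0 ^+ 2 + co a 2 ^+ 2 + co a 4 ^+ 2 + co a 6 ^+ 2))) (y^+2 * ((3) * co a 2)) (y^+2 * ((2) * co a 5)) (y * (- co a 2))); [by ring | exact: hN | exact: hT | exact: hy].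
  + apply: (@by_ideal _ _ _ (co a 0 ^+ 2 - co a 1 ^+ 2 + co a 2 ^+ 2 - co a 3 ^+ 2 + co a 4 ^+ 2 - co a 5 ^+ 2 + co a 6 ^+ 2 - co a 7 ^+ 2) (co a 0 * co a 7 + co a 2 * co a 5 - co a 1 * co a 6 - co a 3 * co a 4) (y * (4 * (co a 0 ^+ 2 + co a 2 ^+ 2 + co a 4 ^+ 2 + co a 6 ^+ 2))) (y^+2 * ((-1) * co a 3)) (y^+2 * ((2) * co a 4)) (y * ( co a 3))); [by ring | exact: hN | exact: hT | exact: hy].
  + apply: (@by_ideal _ _ _ (co a 0 ^+ 2 - co a 1 ^+ 2 + co a 2 ^+ 2 - co a 3 ^+ 2 + co a 4 ^+ 2 - co a 5 ^+ 2 + co a 6 ^+ 2 - co a 7 ^+ 2) (co a 0 * co a 7 + co a 2 * co a 5 - co a 1 * co a 6 - co a 3 * co a 4) (y * (4 * (co a 0 ^+ 2 + co a 2 ^+ 2 + co a 4 ^+ 2 + co a 6 ^+ 2))) (y^+2 * ((3) * co a 4)) (y^+2 * ((-2) * co a 3)) (y * (- co a 4))); [by ring | exact: hN | exact: hT | exact: hy].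
  + apply: (@by_ideal _ _ _ (co a 0 ^+ 2 - co a 1 ^+ 2 + co a 2 ^+ 2 - co a 3 ^+ 2 + co a 4 ^+ 2 - co a 5 ^+ 2 + co a 6 ^+ 2 - co a 7 ^+ 2) (co a 0 * co a 7 + co a 2 * co a 5 - co a 1 * co a 6 - co a 3 * co a 4) (y * (4 * (co a 0 ^+ 2 + co a 2 ^+ 2 + co a 4 ^+ 2 + co a 6 ^+ 2))) (y^+2 * ((-1) * co a 5)) (y^+2 * ((-2) * co a 2)) (y * ( co a 5))); [by ring | exact: hN | exact: hT | exact: hy].
  + apply: (@by_ideal _ _ _ (co a 0 ^+ 2 - co a 1 ^+ 2 + co a 2 ^+ 2 - co a 3 ^+ 2 + co a 4 ^+ 2 - co a 5 ^+ 2 + co a 6 ^+ 2 - co a 7 ^+ 2) (co a 0 * co a 7 + co a 2 * co a 5 - co a 1 * co a 6 - co a 3 * co a 4) (y * (4 * (co a 0 ^+ 2 + co a 2 ^+ 2 + co a 4 ^+ 2 + co a 6 ^+ 2))) (y^+2 * ((3) * co a 6)) (y^+2 * ((-2) * co a 1)) (y * (- co a 6))); [by ring | exact: hN | exact: hT | exact: hy].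
  + apply: (@by_ideal _ _ _ (co a 0 ^+ 2 - co a 1 ^+ 2 + co a 2 ^+ 2 - co a 3 ^+ 2 + co a 4 ^+ 2 - co a 5 ^+ 2 + co a 6 ^+ 2 - co a 7 ^+ 2) (co a 0 * co a 7 + co a 2 * co a 5 - co a 1 * co a 6 - co a 3 * co a 4) (y * (4 * (co a 0 ^+ 2 + co a 2 ^+ 2 + co a 4 ^+ 2 + co a 6 ^+ 2))) (y^+2 * ((1) * co a 7)) (y^+2 * ((2) * co a 0)) (y * (- co a 7))); [by ring | exact: hN | exact: hT | exact: hy].
- apply: eq_cl8; rewrite ?(cp0, cp1, cp2, cp3, cp4, cp5, cp6, cp7) ?(cm0, cm1, cm2, cm3, cm4, cm5, cm6, cm7) !cs ?(cp0, cp1, cp2, cp3, cp4, cp5, cp6, cp7); ring.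
- apply: eq_cl8; rewrite ?(cp0, cp1, cp2, cp3, cp4, cp5, cp6, cp7) ?(cm0, cm1, cm2, cm3, cm4, cm5, cm6, cm7) !cs ?(cp0, cp1, cp2, cp3, cp4, cp5, cp6, cp7); ring.
Qed.
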